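(* Let $X$ be a locally solid $f$-algebra with a multiplicative unit $e$. If either $Orth_b(X)$ (with the topology of uniform convergence on bounded sets) or $Orth_c(X)$ (with the topology of equicontinuous convergence) possesses the Lebesgue property, then $X$ possesses the Lebesgue property.
   Context: All vector lattices are Archimedean. An $f$-algebra is a Riesz algebra such that $x\wedge y=0$ implies $zx\wedge y=xz\wedge y=0$ for every $z\ge0$; a locally solid $f$-algebra is an $f$-algebra with a linear topology having a base of solid zero neighborhoods. An orthomorphism is an order bounded linear operator $T$ with $T(x)\perp y$ whenever $x\perp y$ ($x\perp y$ means $|x|\wedge|y|=0$). $Orth_b(X)$: orthomorphisms mapping bounded sets to bounded sets, with $S_\alpha\to0$ iff for every bounded $B$ and zero neighborhood $V$ there is $\alpha_0$ with $S_\alpha(B)\subseteq V$ for $\alpha\ge\alpha_0$. $Orth_c(X)$: continuous orthomorphisms, with $S_\alpha\to0$ iff for every zero neighborhood $V$ there is a zero neighborhood $U$ such that for every $\varepsilon>0$ there is $\alpha_0$ with $S_\alpha(U)\subseteq\varepsilon V$ for $\alpha\ge\alpha_0$. A locally solid vector lattice $(E,\tau)$ has the Lebesgue property if for every net $(u_\alpha)$ in $E$, $u_\alpha\downarrow 0$ implies $u_\alpha\to0$ in $\tau$. *)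

(* Defs.v *)
(* The lattice order, lattice join, multiplication and the (locally solid)
   linear topology are given explicitly, the topology through a base of zero
   neighbourhoods, exactly as in the paper's definitions. *)
From HB Require Import structures.
From mathcomp Require Import all_boot all_order all_algebra.
From mathcomp Require Import boolp classical_sets reals.

Set Implicit Arguments.
Unset Strict Implicit.
Unset Printing Implicit Defensive.

Import Order.TTheory GRing.Theory Num.Theory.
Local Open Scope ring_scope.
Local Open Scope classical_set_scope.

Section VectorLattice.
Variables (R : realType) (X : lmodType R).
Variables (le : X -> X -> Prop) (join : X -> X -> X).

Definition lmeet (x y : X) : X := - join (- x) (- y).
Definition labs (x : X) : X := join x (- x).
Definition ldisj (x y : X) : Prop := lmeet (labs x) (labs y) = 0.

Definition is_archimedean_vector_lattice : Prop :=
  (forall x, le x x) /\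
      (forall x y z, le x y -> le y z -> le x z) /\
      (forall x y, le x y -> le y x -> x = y) /\
      (forall x y z, le x y -> le (x + z) (y + z)) /\
      (forall (a : R) x y, 0 <= a -> le x y -> le (a *: x) (a *: y)) /\
      (forall x y, le x (join x y) /\ le y (join x y)
                   /\ forall z, le x z -> le y z -> le (join x y) z) /\
      (forall x y, le 0 x -> (forall n : nat, le (n%:R *: x) y) -> x = 0).

Definition is_f_algebra (mul : X -> X -> X) : Prop :=
  is_archimedean_vector_lattice /\
      (forall (a : R) x y z, mul (a *: x + y) z = a *: mul x z + mul y z) /\
      (forall (a : R) x y z, mul z (a *: x + y) = a *: mul z x + mul z y) /\
      (forall x y z, mul x (mul y z) = mul (mul x y) z) /\
      (forall x y, le 0 x -> le 0 y -> le 0 (mul x y)) /\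
      (forall x y z, lmeet x y = 0 -> le 0 z ->
          lmeet (mul z x) y = 0 /\ lmeet (mul x z) y = 0).

Variable N : set (set X).

Definition solid (U : set X) : Prop :=
  forall x y, U x -> le (labs y) (labs x) -> U y.

(* N is a base of zero neighbourhoods of a linear topology consisting of
   solid sets (solid sets are balanced) *)
Definition is_locally_solid_base : Prop :=
  (exists U, N U) /\
      (forall U, N U -> U 0) /\
      (forall U V, N U -> N V -> exists W, N W /\ W `<=` U `&` V) /\
      (forall U, N U -> exists V, N V /\ forall x y, V x -> V y -> U (x + y)) /\
      (forall U x, N U -> exists t : R, 0 < t /\
                     forall l : R, `|l| <= t -> U (l *: x)) /\
      (forall U, N U -> solid U).

Definition nbhd0 (V : set X) : Prop := exists U, N U /\ U `<=` V.

Definition tbounded (B : set X) : Prop :=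
  forall V, nbhd0 V -> exists t : R, 0 < t /\ forall x, B x -> V (t *: x).

Definition directed (I : Type) (leI : I -> I -> Prop) : Prop :=
  inhabited I /\ (forall i, leI i i) /\
      (forall i j k, leI i j -> leI j k -> leI i k) /\
      (forall i j, exists k, leI i k /\ leI j k).

Definition net_conv0 (I : Type) (leI : I -> I -> Prop) (u : I -> X) : Prop :=
  forall V, nbhd0 V -> exists a0, forall a, leI a0 a -> V (u a).

Definition lebesgue_property : Prop :=
  forall (I : Type) (leI : I -> I -> Prop) (u : I -> X),
    directed leI ->
    (forall a b, leI a b -> le (u b) (u a)) ->
    (forall a, le 0 (u a)) ->
    (forall z, (forall a, le z (u a)) -> le z 0) ->
    net_conv0 leI u.

Definition is_orthomorphism (T : X -> X) : Prop :=
  (forall (a : R) x y, T (a *: x + y) = a *: T x + T y) /\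
      (forall a b, exists c d, forall z, le a z -> le z b ->
                   le c (T z) /\ le (T z) d) /\
      (forall x y, ldisj x y -> ldisj (T x) y).

Definition Orth_b (T : X -> X) : Prop :=
  is_orthomorphism T /\ forall B, tbounded B -> tbounded (T @` B).

(* continuity of a linear map = continuity at 0 *)
Definition Orth_c (T : X -> X) : Prop :=
  is_orthomorphism T /\
  forall V, nbhd0 V -> exists U, nbhd0 U /\ T @` U `<=` V.

Definition orth_le (S T : X -> X) : Prop :=
  forall x, le 0 x -> le (S x) (T x).

Definition orth0 : X -> X := fun _ => 0.

Definition orth_b_conv0 (I : Type) (leI : I -> I -> Prop) (S : I -> X -> X)
  : Prop :=
  forall B V, tbounded B -> nbhd0 V ->
    exists a0, forall a, leI a0 a -> S a @` B `<=` V.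

Definition orth_c_conv0 (I : Type) (leI : I -> I -> Prop) (S : I -> X -> X)
  : Prop :=
  forall V, nbhd0 V -> exists U, nbhd0 U /\
    forall eps : R, 0 < eps -> exists a0, forall a, leI a0 a ->
      S a @` U `<=` [set eps *: v | v in V].

(* Lebesgue property of a space of orthomorphisms P (= Orth_b or Orth_c)
   with convergence conv; infima are taken in P *)
Definition orth_lebesgue (P : (X -> X) -> Prop)
  (conv : forall I : Type, (I -> I -> Prop) -> (I -> X -> X) -> Prop) : Prop :=
  forall (I : Type) (leI : I -> I -> Prop) (S : I -> X -> X),
    directed leI ->
    (forall a, P (S a)) ->
    (forall a b, leI a b -> orth_le (S b) (S a)) ->
    (forall a, orth_le orth0 (S a)) ->
    (forall T, P T -> (forall a, orth_le T (S a)) -> orth_le T orth0) ->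
    conv I leI S.

End VectorLattice.

(* Main.v *)
Require Import Defs.
From HB Require Import structures.
From mathcomp Require Import all_boot all_order all_algebra.
From mathcomp Require Import boolp classical_sets reals.

Set Implicit Arguments.
Unset Strict Implicit.
Unset Printing Implicit Defensive.
Import Order.TTheory GRing.Theory Num.Theory.
Local Open Scope ring_scope.
Local Open Scope classical_set_scope.

Section VL.
Variables (R : realType) (X : lmodType R) (le : X -> X -> Prop) (join : X -> X -> X).
Hypothesis HV : is_archimedean_vector_lattice le join.

Lemma lrefl x : le x x. Proof. by case: HV. Qed.
Lemma ltrans x y z : le x y -> le y z -> le x z. Proof. by case: HV => _ [H _]; apply: H. Qed.
Lemma lanti x y : le x y -> le y x -> x = y. Proof. by case: HV => _ [_ [H _]]; apply: H. Qed.
Lemma ladd x y z : le x y -> le (x + z) (y + z). Proof. by case: HV => _ [_ [_ [H _]]]; apply: H. Qed.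
Lemma lscale (a : R) x y : 0 <= a -> le x y -> le (a *: x) (a *: y).
Proof. by case: HV => _ [_ [_ [_ [H _]]]]; apply: H. Qed.
Lemma jub1 x y : le x (join x y). Proof. by case: HV => _ [_ [_ [_ [_ [H _]]]]]; case: (H x y). Qed.
Lemma jub2 x y : le y (join x y). Proof. by case: HV => _ [_ [_ [_ [_ [H _]]]]]; case: (H x y) => _ []. Qed.
Lemma jlub x y z : le x z -> le y z -> le (join x y) z.
Proof. by case: HV => _ [_ [_ [_ [_ [H _]]]]]; case: (H x y) => _ [] _; apply. Qed.
Lemma larch x y : le 0 x -> (forall n : nat, le (n%:R *: x) y) -> x = 0.
Proof. by case: HV => _ [_ [_ [_ [_ [_ H]]]]]; apply: H. Qed.

Lemma laddl x y z : le x y -> le (z + x) (z + y).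
Proof. by move=> h; rewrite ![z + _]addrC; apply: ladd. Qed.
Lemma lsubP x y : le x y <-> le 0 (y - x).
Proof.
split=> h; first by have := ladd (- x) h; rewrite subrr.
by have := ladd x h; rewrite add0r subrK.
Qed.
Lemma lopp x y : le x y -> le (- y) (- x).
Proof.
move=> h; have := ladd (- x - y) h.
by rewrite addrA subrr add0r addrCA subrr addr0.
Qed.
Lemma ladd2 a b c d : le a b -> le c d -> le (a + c) (b + d).
Proof. move=> h1 h2; apply: ltrans (ladd c h1) (laddl b h2). Qed.
Lemma lscale0 (a : R) x : 0 <= a -> le 0 x -> le 0 (a *: x).
Proof. by move=> ha hx; have := lscale ha hx; rewrite scaler0. Qed.

Lemma jcomm x y : join x y = join y x.
Proof. by apply: lanti; apply: jlub; (apply: jub1 || apply: jub2). Qed.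
Lemma jidem x : join x x = x.
Proof. by apply: lanti; [apply: jlub; apply: lrefl | apply: jub1]. Qed.
Lemma jaddr a b c : join (a + c) (b + c) = join a b + c.
Proof.
apply: lanti.
  by apply: jlub; apply: ladd; [apply: jub1 | apply: jub2].
have h : le (join a b) (join (a + c) (b + c) - c).
  apply: jlub.
  - by have := ladd (- c) (jub1 (a + c) (b + c)); rewrite addrK.
  - by have := ladd (- c) (jub2 (a + c) (b + c)); rewrite addrK.
by have := ladd c h; rewrite subrK.
Qed.
Lemma jmono a b c d : le a c -> le b d -> le (join a b) (join c d).
Proof.
move=> h1 h2; apply: jlub; [apply: ltrans h1 (jub1 _ _) | apply: ltrans h2 (jub2 _ _)].
Qed.

Lemma mlb1 x y : le (lmeet join x y) x.
Proof. rewrite /lmeet; have := lopp (jub1 (- x) (- y)); by rewrite opprK. Qed.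
Lemma mlb2 x y : le (lmeet join x y) y.
Proof. rewrite /lmeet; have := lopp (jub2 (- x) (- y)); by rewrite opprK. Qed.
Lemma mglb x y z : le z x -> le z y -> le z (lmeet join x y).
Proof.
move=> h1 h2; rewrite /lmeet.
have := lopp (jlub (lopp h1) (lopp h2)); by rewrite opprK.
Qed.
Lemma mcomm x y : lmeet join x y = lmeet join y x.
Proof. by rewrite /lmeet jcomm. Qed.
Lemma midem x : lmeet join x x = x.
Proof. by rewrite /lmeet jidem opprK. Qed.
Lemma mmono a b c d : le a c -> le b d -> le (lmeet join a b) (lmeet join c d).
Proof.
move=> h1 h2; apply: mglb; [apply: ltrans (mlb1 _ _) h1 | apply: ltrans (mlb2 _ _) h2].
Qed.

Lemma labs_ub x : le x (labs join x). Proof. exact: jub1. Qed.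
Lemma labs_ubN x : le (- x) (labs join x). Proof. exact: jub2. Qed.
Lemma labs_ge0 x : le 0 (labs join x).
Proof.
have h := ladd2 (labs_ub x) (labs_ubN x); rewrite subrr in h.
have h2 : (0 : R) <= 2^-1 by rewrite invr_ge0.
have := lscale h2 h; rewrite scaler0 -mulr2n -scaler_nat scalerA mulVf ?scale1r //.
by rewrite pnatr_eq0.
Qed.
Lemma labs_pos x : le 0 x -> labs join x = x.
Proof.
move=> h; apply: lanti; last exact: labs_ub.
apply: jlub; first exact: lrefl.
apply: ltrans (h); have := lopp h; by rewrite oppr0.
Qed.
Lemma disj_le a b c : le 0 a -> le a b -> le 0 c -> lmeet join b c = 0 ->
  lmeet join a c = 0.
Proof.
move=> ha hab hc hb; apply: lanti; first by rewrite -hb; apply: mmono => //; exact: lrefl.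
exact: mglb.
Qed.
Lemma pp_sub d : join d 0 - join (- d) 0 = d.
Proof.
have : join (- d) 0 = join d 0 - d.
  by rewrite -jaddr subrr add0r jcomm.
by move=> ->; rewrite opprB addrC subrK.
Qed.
Lemma pp_disj d : lmeet join (join d 0) (join (- d) 0) = 0.
Proof.
have e1 : join (- d) 0 = join d 0 - d by rewrite -jaddr subrr add0r jcomm.
rewrite /lmeet e1 opprB.
have -> : join (- join d 0) (d - join d 0) = join 0 d - join d 0.
  by rewrite -jaddr add0r.
by rewrite jcomm subrr oppr0.
Qed.
Lemma pp_ge0 d : le 0 (join d 0). Proof. exact: jub2. Qed.

Section FA.
Variables (mul : X -> X -> X) (e : X).
Hypothesis HF : is_f_algebra le join mul.
Hypothesis He : forall x, mul e x = x /\ mul x e = x.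

Lemma mull a x y z : mul (a *: x + y) z = a *: mul x z + mul y z.
Proof. by case: HF => _ [H _]; apply: H. Qed.
Lemma mulr a x y z : mul z (a *: x + y) = a *: mul z x + mul z y.
Proof. by case: HF => _ [_ [H _]]; apply: H. Qed.
Lemma mulpos x y : le 0 x -> le 0 y -> le 0 (mul x y).
Proof. by case: HF => _ [_ [_ [_ [H _]]]]; apply: H. Qed.
Lemma fdisj x y z : lmeet join x y = 0 -> le 0 z ->
  lmeet join (mul z x) y = 0 /\ lmeet join (mul x z) y = 0.
Proof. by case: HF => _ [_ [_ [_ [_ H]]]]; apply: H. Qed.
Lemma mule x : mul e x = x. Proof. by case: (He x). Qed.
Lemma mulxe x : mul x e = x. Proof. by case: (He x). Qed.

Lemma mul0r z : mul z 0 = 0.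
Proof.
have := mulr 1 0 0 z; rewrite !scale1r addr0 => h.
have := congr1 (fun t => t - mul z 0) h.
by rewrite subrr addrK => <-.
Qed.
Lemma mul0l z : mul 0 z = 0.
Proof.
have := mull 1 0 0 z; rewrite !scale1r addr0 => h.
have := congr1 (fun t => t - mul 0 z) h.
by rewrite subrr addrK => <-.
Qed.
Lemma mulrD z x y : mul z (x + y) = mul z x + mul z y.
Proof. by have := mulr 1 x y z; rewrite !scale1r. Qed.
Lemma mullD z x y : mul (x + y) z = mul x z + mul y z.
Proof. by have := mull 1 x y z; rewrite !scale1r. Qed.
Lemma mulrZ z a x : mul z (a *: x) = a *: mul z x.
Proof. by have := mulr a x 0 z; rewrite !addr0 mul0r addr0. Qed.
Lemma mullZ z a x : mul (a *: x) z = a *: mul x z.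
Proof. by have := mull a x 0 z; rewrite !addr0 mul0l addr0. Qed.
Lemma mulrN z x : mul z (- x) = - mul z x.
Proof. by rewrite -scaleN1r mulrZ scaleN1r. Qed.
Lemma mullN z x : mul (- x) z = - mul x z.
Proof. by rewrite -scaleN1r mullZ scaleN1r. Qed.
Lemma mulrB z x y : mul z (x - y) = mul z x - mul z y.
Proof. by rewrite mulrD mulrN. Qed.
Lemma mullB z x y : mul (x - y) z = mul x z - mul y z.
Proof. by rewrite mullD mullN. Qed.

Lemma mulmono_r z x y : le 0 z -> le x y -> le (mul z x) (mul z y).
Proof. by move=> hz /lsubP h; apply/lsubP; rewrite -mulrB; apply: mulpos. Qed.
Lemma mulmono_l z x y : le 0 z -> le x y -> le (mul x z) (mul y z).
Proof. by move=> hz /lsubP h; apply/lsubP; rewrite -mullB; apply: mulpos. Qed.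

Lemma disj_mul0 x y : le 0 x -> le 0 y -> lmeet join x y = 0 -> mul x y = 0.
Proof.
move=> hx hy h.
have h1 : lmeet join (mul x y) y = 0 by case: (fdisj h hy).
rewrite mcomm in h1.
have [h2 _] := fdisj h1 hx.
by rewrite midem in h2.
Qed.

Lemma sq_ge0 y : le 0 (mul y y).
Proof.
rewrite -{1 2}(pp_sub y).
set p := join y 0; set q := join (- y) 0.
have hp : le 0 p by exact: pp_ge0.
have hq : le 0 q by exact: pp_ge0.
have hpq : mul p q = 0 by apply: disj_mul0 => //; exact: pp_disj.
have hqp : mul q p = 0 by apply: disj_mul0 => //; rewrite mcomm; exact: pp_disj.
rewrite mulrB !mullB hpq hqp subr0 sub0r opprK.
by have := ladd2 (mulpos hp hp) (mulpos hq hq); rewrite addr0.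
Qed.

Lemma e_ge0 : le 0 e. Proof. by rewrite -(mule e); exact: sq_ge0. Qed.

Lemma keyK y (c : R) : le 0 y -> 0 < c ->
  le (join (y - c *: e) 0) (c^-1 *: mul y y).
Proof.
move=> hy hc.
set d := y - c *: e; set p := join d 0; set q := join (- d) 0.
have hp : le 0 p by exact: pp_ge0.
have hq : le 0 q by exact: pp_ge0.
have hqp : mul q p = 0 by apply: disj_mul0 => //; rewrite mcomm; exact: pp_disj.
have h1 : le 0 (mul d p).
  by rewrite -(pp_sub d) -/p -/q mullB hqp subr0; exact: mulpos.
have h2 : le (c *: p) (mul y p).
  by move: h1; rewrite /d mullB mullZ mule => h; apply/lsubP.
have hpy : le p y.
  apply: jlub => //; apply/lsubP; rewrite /d opprB addrC subrK.
  exact: lscale0 (ltW hc) e_ge0.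
have h3 : le (c *: p) (mul y y) := ltrans h2 (mulmono_r hy hpy).
have hc' : 0 <= c^-1 by rewrite invr_ge0 ltW.
have := lscale hc' h3.
by rewrite scalerA mulVf ?scale1r // gt_eqF.
Qed.

Variable N : set (set X).
Hypothesis HN : is_locally_solid_base le join N.

Lemma Nsolid U x y : N U -> U x -> le (labs join y) (labs join x) -> U y.
Proof. by case: HN => _ [_ [_ [_ [_ H]]]] hU; apply: H. Qed.
Lemma Nadd U : N U -> exists V, N V /\ forall x y, V x -> V y -> U (x + y).
Proof. by case: HN => _ [_ [_ [H _]]]; apply: H. Qed.
Lemma Nabs U x : N U -> exists t : R, 0 < t /\ forall l : R, `|l| <= t -> U (l *: x).
Proof. by case: HN => _ [_ [_ [_ [H _]]]]; apply: H. Qed.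

Lemma mabs2 v y : le 0 v -> le (labs join (mul v y)) (mul v (labs join y)).
Proof.
move=> hv; apply: jlub; first exact: mulmono_r (labs_ub _).
by rewrite -mulrN; apply: mulmono_r (labs_ubN _).
Qed.
Lemma mabs v y : le 0 v -> le v e -> le (labs join (mul v y)) (labs join y).
Proof.
move=> hv hve; apply: ltrans (mabs2 y hv) _.
by rewrite -{2}(mule (labs join y)); apply: mulmono_l => //; exact: labs_ge0.
Qed.

Lemma mulop_orth v : le 0 v -> le v e ->
  Orth_b le join N (mul v) /\ Orth_c le join N (mul v).
Proof.
move=> hv hve.
have orth : is_orthomorphism le join (mul v).
  split; first by move=> a x y; exact: mulr.
  split.
    move=> a b; exists (mul v a), (mul v b) => z h1 h2.
    by split; apply: mulmono_r.
  move=> x y; rewrite /ldisj => h.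
  have [h1 _] := fdisj h hv.
  apply: disj_le h1; [exact: labs_ge0 | exact: mabs2 | exact: labs_ge0].
split; split => //.
  move=> B hB V [U [hU hUV]].
  have [t [ht htB]] := hB U (ex_intro _ U (conj hU (fun x h => h))).
  exists t; split => // _ [b hb <-].
  apply: hUV; rewrite -mulrZ; apply: (Nsolid hU (htB b hb)).
  exact: mabs.
move=> V [U [hU hUV]]; exists U; split; first by exists U; split.
move=> _ [y hy <-]; apply: hUV; apply: (Nsolid hU hy); exact: mabs.
Qed.

Lemma claim (I : Type) (leI : I -> I -> Prop) (u : I -> X) (n : nat) :
  (0 < n)%N ->
  orth_lebesgue le (Orth_b le join N) (@orth_b_conv0 R X N)
   \/ orth_lebesgue le (Orth_c le join N) (@orth_c_conv0 R X N) ->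
  directed leI -> (forall a b, leI a b -> le (u b) (u a)) ->
  (forall a, le 0 (u a)) ->
  (forall z, (forall a, le z (u a)) -> le z 0) ->
  forall V, nbhd0 N V -> exists a1, forall a, leI a1 a ->
    V (n%:R *: lmeet join (n%:R^-1 *: u a) e).
Proof.
move=> n0 Hor hdir hdec hpos hinf V hV.
set v := fun a => lmeet join (n%:R^-1 *: u a) e.
have hn : 0 < n%:R :> R by rewrite ltr0n.
have hn' : 0 <= n%:R^-1 :> R by rewrite invr_ge0 ltW.
have hv0 a : le 0 (v a) := mglb (lscale0 hn' (hpos a)) e_ge0.
have hve a : le (v a) e := mlb2 _ _.
have hPS a := mulop_orth (hv0 a) (hve a).
have hdec' a b : leI a b -> orth_le le (mul (v b)) (mul (v a)).
  move=> hab y hy; apply: mulmono_l hy _; apply: mmono.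
    exact: lscale hn' (hdec _ _ hab).
  exact: lrefl.
have hpos' a : orth_le le (@orth0 R X) (mul (v a)) := fun y hy => mulpos (hv0 a) hy.
have hinf' : forall T : X -> X, (forall a, orth_le le T (mul (v a))) ->
    orth_le le T (@orth0 R X).
  move=> T hT y hy; rewrite /orth0.
  have hm : forall m : nat, (0 < m)%N -> le (T y) (m%:R^-1 *: mul y y).
    move=> m hm; set c : R := m%:R.
    have hc : 0 < c by rewrite ltr0n.
    have hc' : 0 <= c^-1 by rewrite invr_ge0 ltW.
    set q := join (y - c *: e) 0.
    have hyq : le y (c *: e + q).
      by have := ladd (c *: e) (jub1 (y - c *: e) 0); rewrite subrK addrC.
    have hK := keyK hy hc.
    have hz : forall a, le (T y - c^-1 *: mul y y) (c *: v a).
      move=> a.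
      have h1 : le (T y) (mul (v a) y) := hT a y hy.
      have h2 : le (mul (v a) y) (c *: v a + q).
        apply: ltrans (mulmono_r (hv0 a) hyq) _; rewrite mulrD mulrZ mulxe.
        apply: laddl; rewrite -{2}(mule q); exact: mulmono_l (pp_ge0 _) (hve a).
      have h3 := ltrans h1 (ltrans h2 (laddl _ hK)).
      by move/lsubP: h3; rewrite -addrA -opprB => h; apply/lsubP.
    set z := T y - c^-1 *: mul y y.
    have hz2 : le ((n%:R * c^-1) *: z) 0.
      apply: hinf => a.
      have h4 : le (c^-1 *: z) (v a).
        by have := lscale hc' (hz a); rewrite scalerA mulVf ?gt_eqF // scale1r.
      have := lscale (ltW hn) (ltrans h4 (mlb1 _ _)).
      by rewrite !scalerA mulfV ?gt_eqF // scale1r.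
    have hk : 0 <= c * n%:R^-1 by rewrite mulr_ge0 // ltW.
    have := lscale hk hz2.
    rewrite scalerA scaler0.
    have -> : c * n%:R^-1 * (n%:R * c^-1) = 1.
      by rewrite mulrA -(mulrA c) mulVf ?gt_eqF // mulr1 mulfV ?gt_eqF.
    rewrite scale1r => hz3.
    by have := ladd (c^-1 *: mul y y) hz3; rewrite subrK add0r.
  set pp := join (T y) 0.
  have hpp : pp = 0.
    apply: (@larch pp (mul y y)); first exact: pp_ge0.
    case=> [|m]; first by rewrite scale0r; exact: sq_ge0.
    have h : le pp (m.+1%:R^-1 *: mul y y).
      apply: jlub; first exact: hm.
      by apply: lscale0; [rewrite invr_ge0 | exact: sq_ge0].
    have := lscale (ler0n _ m.+1) h.
    by rewrite scalerA mulfV ?scale1r // pnatr_eq0.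
  by rewrite -hpp; exact: jub1.
case: Hor => Hor.
  have hconv := Hor I leI (fun a => mul (v a)) hdir (fun a => (hPS a).1) hdec'
    hpos' (fun T _ => hinf' T).
  have hB : tbounded N [set n%:R *: e].
    move=> W [U [hU hUW]]; have [t [ht htx]] := Nabs (n%:R *: e) hU.
    exists t; split=> // _ ->; apply: hUW; apply: htx.
    by rewrite ger0_norm // ltW.
  have [a1 ha1] := hconv _ V hB hV.
  exists a1 => a ha; apply: (ha1 a ha); exists (n%:R *: e) => //.
  by rewrite /= mulrZ mulxe.
have hconv := Hor I leI (fun a => mul (v a)) hdir (fun a => (hPS a).2) hdec'
  hpos' (fun T _ => hinf' T).
have [U [[U' [hU' hU'U]] hU]] := hconv V hV.
have [t [ht htx]] := Nabs (n%:R *: e) hU'.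
have [a1 ha1] := hU t ht.
exists a1 => a ha.
have : [set t *: w | w in V] (mul (v a) (t *: (n%:R *: e))).
  apply: (ha1 a ha); exists (t *: (n%:R *: e)) => //; apply: hU'U; apply: htx.
  by rewrite ger0_norm // ltW.
case=> w hw; rewrite mulrZ mulrZ mulxe => /(GRing.scalerI (lt0r_neq0 ht)) hwv.
by move: hw; rewrite hwv.
Qed.
End FA.
End VL.

Theorem mainTheorem11 (R : realType) (X : lmodType R)
  (le : X -> X -> Prop) (join : X -> X -> X) (mul : X -> X -> X)
  (N : set (set X)) (e : X) :
  is_f_algebra le join mul ->
  is_locally_solid_base le join N ->
  (forall x, mul e x = x /\ mul x e = x) ->
  (orth_lebesgue le (Orth_b le join N) (@orth_b_conv0 R X N)
   \/ orth_lebesgue le (Orth_c le join N) (@orth_c_conv0 R X N)) ->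
  lebesgue_property le N.
Proof.
move=> HF HN He Hor I leI u hdir hdec hpos hinf V hV.
have HV : is_archimedean_vector_lattice le join by case: HF.
have hdir' := hdir; case: hdir' => [[a0] [_ [htr hk]]].
set x := u a0.
case: hV => U0 [hU0 hU0V].
have [U1 [hU1 hU1a]] := Nadd HN hU0.
have [t [ht htx]] := Nabs HN (mul x x) hU1.
set n := (Num.truncn t^-1).+1.
have hn : 0 < n%:R :> R by rewrite ltr0n.
have hnt : n%:R^-1 < t.
  by rewrite invf_plt ?posrE // truncnS_gt.
have [a1 ha1] := claim HV HF He HN (n := n) isT Hor hdir hdec hpos hinf
  (ex_intro _ U1 (conj hU1 (fun _ h => h))).
have [a2 [h02 h12]] := hk a0 a1.
exists a2 => a ha.
have ha0 : leI a0 a := htr _ _ _ h02 ha.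
have ha1' := ha1 a (htr _ _ _ h12 ha).
set r := n%:R^-1 *: u a.
set vv := lmeet join r e.
have hrv : r - vv = join (r - e) 0.
  rewrite /vv /lmeet opprK addrC -(jaddr HV) addNr [- e + r]addrC.
  exact: jcomm HV _ _.
have hn' : 0 <= n%:R^-1 :> R by rewrite invr_ge0 ltW.
have hr0 : le 0 r := lscale0 HV hn' (hpos a).
have hK := keyK HV HF He hr0 ltr01.
rewrite scale1r invr1 scale1r -hrv /r (mullZ HF) (mulrZ HF) -/r in hK.
have hux : le (mul (u a) (u a)) (mul x x).
  rewrite /x; apply: (ltrans HV (mulmono_r HV HF (hpos a) (hdec _ _ ha0))).
  exact: (mulmono_l HV HF (hpos a0) (hdec _ _ ha0)).
have h5 : le (r - vv) (n%:R^-1 *: (n%:R^-1 *: mul x x)).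
  apply: (ltrans HV hK); apply: (lscale HV hn'); exact: (lscale HV hn' hux).
have h6 := ladd2 HV (lrefl HV (n%:R *: vv)) (lscale HV (ltW hn) h5).
have e1 : n%:R *: vv + n%:R *: (r - vv) = u a.
  by rewrite scalerBr addrC subrK /r scalerA mulfV ?scale1r // gt_eqF.
have e2 : n%:R *: (n%:R^-1 *: (n%:R^-1 *: mul x x)) = n%:R^-1 *: mul x x.
  by rewrite scalerA mulfV ?scale1r // gt_eqF.
rewrite e1 e2 in h6.
set s := n%:R *: vv + n%:R^-1 *: mul x x in h6.
have hs : U0 s.
  apply: hU1a => //; apply: htx.
  by rewrite ger0_norm // ltW.
apply: hU0V; apply: (Nsolid HN hU0 hs).
rewrite (labs_pos HV (hpos a)) (labs_pos HV (ltrans HV (hpos a) h6)).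
exact: h6.
Qed.
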